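(* Let $r\in\mathbb{R}$. For all integers $n,m,k\ge 0$ with $n\ge m+k$, \[ \binom{m+k}{m} S_{2,r}(n,m+k) = \sum_{n_1=m}^n \sum_{l=0}^m \sum_{j=0}^k \binom{n_1}{l}\binom{n-n_1}{j}\binom{n}{n_1} r^{l+j} S_2(n_1-l,m-l)\, S_2(n-n_1-j,k-j). \]
   Context: $S_2(n,k)$ denotes the Stirling numbers of the second kind, $\frac{1}{k!}(e^t-1)^k = \sum_{n\ge k} S_2(n,k)\frac{t^n}{n!}$, with $S_2(a,b)=0$ whenever $a<b$, and $\binom{a}{b}=0$ for $b>a$. For $r\in\mathbb{R}$ and integer $k\ge 0$, the extended Stirling numbers of the second kind $S_{2,r}(n,k)$ are defined by $\frac{1}{k!}(e^t-1+rt)^k = \sum_{n=k}^\infty S_{2,r}(n,k)\frac{t^n}{n!}$. *)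

(* Defs.v *)
(* Formal power series with coefficients in a field R are
   represented as coefficient functions nat -> R. *)
From mathcomp Require Import all_boot all_order all_algebra.
Set Implicit Arguments. Unset Strict Implicit. Unset Printing Implicit Defensive.
Import Order.TTheory GRing.Theory Num.Theory.
Local Open Scope ring_scope.

Definition fps_mul (R : ringType) (f g : nat -> R) : nat -> R :=
  fun n => \sum_(i < n.+1) f i * g (n - i)%N.

Definition fps_one (R : ringType) : nat -> R := fun n => (n == 0)%:R.

Definition fps_pow (R : ringType) (f : nat -> R) (k : nat) : nat -> R :=
  iter k (fps_mul f) (@fps_one R).

(* coefficients of e^t - 1 + r t *)
Definition expm1_rt (R : fieldType) (r : R) : nat -> R :=
  fun i => (i != 0%N)%:R / (i`!)%:R + (i == 1%N)%:R * r.

(* extended Stirling numbers of the second kind: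
   (1/k!) (e^t - 1 + r t)^k = sum_n S_{2,r}(n,k) t^n / n! *)
Definition S2r (R : fieldType) (r : R) (n k : nat) : R :=
  (n`!)%:R / (k`!)%:R * fps_pow (expm1_rt r) k n.

Definition S2 (R : fieldType) (n k : nat) : R := S2r (0 : R) n k.

(* Main.v *)
Require Import Defs.
From mathcomp Require Import all_boot all_order all_algebra.
From mathcomp Require Import ring lra zify.
Import Order.TTheory GRing.Theory Num.Theory.
Local Open Scope ring_scope.

Lemma fps_pow_coef (R : ringType) (f : nat -> R) N k i : (i < N)%N ->
  fps_pow f k i = ((\poly_(j < N) f j) ^+ k)`_i.
Proof.
elim: k i => [|k IH] i hi.
  by rewrite /fps_pow /= /fps_one expr0 coef1.
rewrite /fps_pow iterS -/(fps_pow f k) exprS coefM /fps_mul.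
apply: eq_bigr => j _.
rewrite coef_poly (leq_ltn_trans (ltnSE (ltn_ord j)) hi) IH //.
exact: leq_ltn_trans (leq_subr j i) hi.
Qed.

Lemma pow_low (R : ringType) (p : {poly R}) m i : p`_0 = 0 -> (i < m)%N -> (p ^+ m)`_i = 0.
Proof.
move=> p0; elim: m i => [|m IH] i hi //.
rewrite exprS coefM big1 // => j _.
case: (nat_of_ord j) (ltn_ord j) => [|j'] hj; first by rewrite p0 mul0r.
rewrite IH ?mulr0 //; lia.
Qed.

Definition PP {R : fieldType} (r : R) N : {poly R} := \poly_(j < N) expm1_rt r j.

Lemma PP_split (R : fieldType) (r : R) N : (1 < N)%N -> PP r N = PP 0 N + r *: 'X.
Proof.
move=> hN; apply/polyP => i.
rewrite coefD coefZ coefX /PP !coef_poly /expm1_rt.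
case: ifP => hi; first by rewrite mulr0 addr0 [r * _]mulrC.
have -> : (i == 1%N) = false by apply/eqP; move/negbT: hi; rewrite -leqNgt; lia.
by rewrite mulr0 addr0.
Qed.

Lemma PP0 (R : fieldType) (r : R) N : (PP r N)`_0 = 0.
Proof. by rewrite /PP coef_poly; case: ifP => //; rewrite /expm1_rt /= mul0r mul0r addr0. Qed.

Lemma factr_neq0 (R : realFieldType) n : (n`!)%:R != 0 :> R.
Proof. by rewrite pnatr_eq0 -lt0n fact_gt0. Qed.

Lemma key (R : realFieldType) (r : R) N mm i : (1 < N)%N -> (i < N)%N ->
  (i`!)%:R / (mm`!)%:R * ((PP r N) ^+ mm)`_i =
  \sum_(l < mm.+1) ('C(i, l))%:R * r ^+ l * S2 R (i - l) (mm - l).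
Proof.
move=> hN hi.
rewrite PP_split // exprDn coef_sum mulr_sumr.
apply: eq_bigr => l _.
have hl : (l <= mm)%N by rewrite -ltnS.
rewrite coefMn exprZn -scalerAr coefZ coefMXn.
rewrite /S2 /S2r (@fps_pow_coef _ _ N); last by lia.
case: (ltnP i l) => hil.
  by rewrite (bin_small hil) mulr0 mul0rn mulr0 !mul0r.
rewrite -/(PP 0 N).
have h1 := bin_fact hl.
have h2 := bin_fact hil.
have e1 : ('C(mm, l))%:R * ((l`!)%:R * ((mm - l)`!)%:R) = (mm`!)%:R :> R
  by rewrite -!natrM h1.
have e2 : ('C(i, l))%:R * ((l`!)%:R * ((i - l)`!)%:R) = (i`!)%:R :> R
  by rewrite -!natrM h2.
rewrite -mulr_natr -e1 -e2.
have := factr_neq0 R l; have := factr_neq0 R (mm - l); have := factr_neq0 R (i - l).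
move=> n1 n2 n3.
have n4 : ('C(mm, l))%:R != 0 :> R by rewrite pnatr_eq0 -lt0n bin_gt0.
field.
by rewrite n4 n3 n2.
Qed.

Theorem mainTheorem6 (R : realFieldType) (r : R) (n m k : nat)
  (hn : (m + k <= n)%N) :
  ('C(m + k, m))%:R * S2r r n (m + k) =
  \sum_(m <= n1 < n.+1) \sum_(l < m.+1) \sum_(j < k.+1)
    ('C(n1, l))%:R * ('C(n - n1, j))%:R * ('C(n, n1))%:R * r ^+ (l + j)
      * S2 R (n1 - l) (m - l) * S2 R (n - n1 - j) (k - j).
Proof.
have hN : (1 < n.+2)%N by [].
rewrite /S2r (@fps_pow_coef _ _ n.+2) // -/(PP r n.+2) exprD coefM.
transitivity (\sum_(0 <= i < n.+1) ('C(n, i))%:R *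
   (((i`!)%:R / (m`!)%:R * ((PP r n.+2) ^+ m)`_i) *
    (((n - i)`!)%:R / (k`!)%:R * ((PP r n.+2) ^+ k)`_(n - i))) : R).
  rewrite big_mkord !mulr_sumr; apply: eq_bigr => i _.
  have hi : (i <= n)%N by rewrite -ltnS.
  have e1 : ('C(n, i))%:R * ((i`!)%:R * ((n - i)`!)%:R) = (n`!)%:R :> R
    by rewrite -!natrM bin_fact.
  have hmk : (m <= m + k)%N by rewrite leq_addr.
  have e2 : ('C(m + k, m))%:R * ((m`!)%:R * ((m + k - m)`!)%:R) = ((m + k)`!)%:R :> R
    by rewrite -!natrM bin_fact.
  rewrite addKn in e2.
  rewrite -e1 -e2.
  have := factr_neq0 R m; have := factr_neq0 R k; have := factr_neq0 R i;
  have := factr_neq0 R (n - i).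
  have n5 : ('C(m + k, m))%:R != 0 :> R by rewrite pnatr_eq0 -lt0n bin_gt0.
  move=> n1 n2 n3 n4.
  field.
  by rewrite n5 n4 n3.
rewrite (big_cat_nat _ (n := m)) //=; last by lia.
rewrite [X in X + _]big1_seq ?add0r; last first.
  move=> i /andP[_]; rewrite mem_iota add0n => /andP[_ hi].
  by rewrite pow_low ?PP0 ?mulr0 ?mul0r ?mulr0 //; rewrite subn0 in hi.
apply: eq_big_nat => i /andP[_ hi].
rewrite (@key R r n.+2 m i hN) ?(@key R r n.+2 k (n - i) hN); [|lia|lia].
rewrite big_distrl mulr_sumr; apply: eq_bigr => l _.
rewrite big_distrr mulr_sumr; apply: eq_bigr => j _.
rewrite exprD /=; ring.
Qed.
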